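(* Let $(A,\mathfrak{m}_A)$ be a complete Noetherian local domain. Assume $A$ has a $\delta$-structure such that $\mathfrak{m}_A$ is generated by elements $p,x_1,\dots,x_n$ with $\delta(x_i)\in\mathfrak{m}_A$ for all $i$. Then for an ideal $I\subseteq A$ the following are equivalent: (1) $(A,I)$ is an orientable prism; (2) $I$ is generated by a distinguished element $d\in\mathfrak{m}_A$; (3) $I$ is generated by $p-f$ for some $f\in(x_1,\dots,x_n)$.
   Context: All rings are commutative $\mathbb{Z}_{(p)}$-algebras. A $\delta$-structure is $\delta:A\to A$ with $\delta(0)=\delta(1)=0$, $\delta(a+b)=\delta(a)+\delta(b)+\frac{a^p+b^p-(a+b)^p}{p}$, $\delta(ab)=a^p\delta(b)+b^p\delta(a)+p\delta(a)\delta(b)$, Frobenius lift $\varphi(a)=a^p+p\delta(a)$; $d$ is distinguished if $\delta(d)$ is a unit. A prism is a pair $(A,I)$ with $I$ locally free of rank one, $A$ derived $(p,I)$-complete and $p\in I+\varphi(I)A$; it is orientable if $I$ is principal. *)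

(* Defs.v *)
From HB Require Import structures.
From mathcomp Require Import all_boot all_order all_algebra.
Set Implicit Arguments. Unset Strict Implicit. Unset Printing Implicit Defensive.
Import Order.TTheory GRing.Theory Num.Theory.
Local Open Scope ring_scope.

Section Defs.
Variable A : comUnitRingType.

Definition is_ideal (I : A -> Prop) : Prop :=
  [/\ I 0, (forall x y, I x -> I y -> I (x + y)) & (forall a x, I x -> I (a * x))].

Definition same_set (I J : A -> Prop) : Prop := forall y, I y <-> J y.

Definition ideal_gen (k : nat) (g : 'I_k -> A) : A -> Prop :=
  fun y => exists c : 'I_k -> A, y = \sum_(i < k) c i * g i.

Definition ideal_span (S : A -> Prop) : A -> Prop :=
  fun y => exists k (c g : 'I_k -> A), (forall i, S (g i)) /\ y = \sum_(i < k) c i * g i.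

Definition principal_ideal (d : A) : A -> Prop := ideal_span (fun y => y = d).

(* family (a, g_0, ..., g_{n-1}) *)
Definition cons_gen (n : nat) (a : A) (g : 'I_n -> A) : 'I_n.+1 -> A :=
  fun i => match unlift ord0 i with Some j => g j | None => a end.

Definition ideal_mul (I J : A -> Prop) : A -> Prop :=
  ideal_span (fun y => exists a b, I a /\ J b /\ y = a * b).

Fixpoint ideal_pow (I : A -> Prop) (k : nat) : A -> Prop :=
  match k with 0 => (fun _ => True) | k'.+1 => ideal_mul (ideal_pow I k') I end.

Definition is_maximal_ideal (M : A -> Prop) : Prop :=
  [/\ is_ideal M, ~ M 1 &
      forall J, is_ideal J -> (forall y, M y -> J y) -> J 1 \/ same_set J M].

Definition is_local_with (m : A -> Prop) : Prop :=
  is_maximal_ideal m /\ forall M, is_maximal_ideal M -> same_set M m.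

Definition noetherian : Prop :=
  forall J, is_ideal J -> exists k (g : 'I_k -> A), same_set J (ideal_gen g).

(* m-adically complete and separated: A -> lim A/m^k is bijective *)
Definition adically_complete (m : A -> Prop) : Prop :=
  (forall a : nat -> A, (forall k, ideal_pow m k (a k.+1 - a k)) ->
      exists x, forall k, ideal_pow m k (x - a k)) /\
  (forall x, (forall k, ideal_pow m k x) -> x = 0).

(* Z_(p)-algebra: all primes other than p are invertible *)
Definition Zp_local_algebra (p : nat) : Prop :=
  forall l : nat, prime l -> l != p -> (l%:R : A) \is a GRing.unit.

(* (a^p + b^p - (a+b)^p)/p written with integral coefficients *)
Definition delta_add_term (p : nat) (a b : A) : A :=
  - \sum_(1 <= i < p) ('C(p, i) %/ p)%:R * a ^+ i * b ^+ (p - i).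

Definition is_delta_structure (p : nat) (delta : A -> A) : Prop :=
  [/\ delta 0 = 0, delta 1 = 0,
      (forall a b, delta (a + b) = delta a + delta b + delta_add_term p a b) &
      (forall a b, delta (a * b) =
          a ^+ p * delta b + b ^+ p * delta a + p%:R * delta a * delta b)].

Definition frob (p : nat) (delta : A -> A) (a : A) : A := a ^+ p + p%:R * delta a.

Definition distinguished (delta : A -> A) (d : A) : Prop :=
  delta d \is a GRing.unit.

(* Derived completeness of the module A w.r.t. an ideal J (Stacks 091S):
   for every f in J, T(A,f) = Rlim(... -f-> A -f-> A) = 0, i.e. lim = R^1 lim = 0,
   i.e. the map prod_k A -> prod_k A, (s_k) |-> (s_k - f s_{k+1}) is bijective. *)
Definition derived_complete (J : A -> Prop) : Prop :=
  forall f, J f ->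
    (forall t : nat -> A, exists s : nat -> A, forall k, s k - f * s k.+1 = t k) /\
    (forall s s' : nat -> A, (forall k, s k - f * s k.+1 = s' k - f * s' k.+1) ->
        forall k, s k = s' k).

(* I is locally free of rank one: there are f_1..f_r generating the unit ideal
   such that each localisation I_{f_i} is free of rank one over A_{f_i}, with
   basis g_i/1 (g_i in I); written out in terms of elements of A. *)
Definition locally_free_rank_one (I : A -> Prop) : Prop :=
  exists r (f : 'I_r -> A), ideal_gen f 1 /\
    forall i, exists g, I g /\
      (forall y, I y -> exists N a, f i ^+ N * y = a * g) /\
      (forall a, (exists N, f i ^+ N * (a * g) = 0) -> exists M, f i ^+ M * a = 0).

Definition is_prism (p : nat) (delta : A -> A) (I : A -> Prop) : Prop :=
  [/\ is_ideal I, locally_free_rank_one I,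
      derived_complete (ideal_span (fun y => y = p%:R \/ I y)) &
      exists i j, I i /\ ideal_span (fun y => exists z, I z /\ y = frob p delta z) j
                  /\ p%:R = i + j].

Definition is_orientable_prism (p : nat) (delta : A -> A) (I : A -> Prop) : Prop :=
  is_prism p delta I /\ exists d, same_set I (principal_ideal d).

End Defs.

(* Main.v *)
Require Import Defs.
From HB Require Import structures.
From mathcomp Require Import all_boot all_order all_algebra.
From mathcomp Require Import ring zify.
From Stdlib Require Import Classical ClassicalEpsilon.
Import GRing.Theory.

Lemma nat_id p j : prime p ->
  p * (\sum_(1 <= i < p) ('C(p,i) %/ p) * j ^ i) + j ^ p + 1 = (j+1)^p.
Proof.
move=> pp; have p0 := prime_gt0 pp.
rewrite [j + 1]addnC expnDn -(big_mkord (fun _ => true) (fun i => ('C(p, i) * (1 ^ (p - i) * j ^ i)))).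
idtac.
rewrite big_nat_recr //= [\sum_(0 <= i < p) _]big_ltn //= bin0 binn subnn !exp1n !mul1n expn0.
rewrite -addnA [j ^ p + 1]addnC addnA (addnC 1); congr (_ + _ + _).
rewrite big_distrr /=.
apply: eq_big_nat => i /andP[i1 ip]; rewrite exp1n mul1n mulnA [p * _]mulnC divnK //.
by apply: prime_dvd_bin; rewrite // i1 ip.
Qed.

Lemma nat_sum p : prime p ->
  (\sum_(0 <= j < p) \sum_(1 <= i < p) ('C(p,i) %/ p) * j ^ i).+1 = p ^ p.-1.
Proof.
move=> pp; have p0 := prime_gt0 pp.
have H: forall k, p * (\sum_(0 <= j < k) \sum_(1 <= i < p) ('C(p,i) %/ p) * j ^ i)
   + k = k ^ p.
  elim=> [|k IH]; first by rewrite big_geq // muln0 exp0n.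
  rewrite big_nat_recr //= mulnDr -[k.+1]addn1.
  have := nat_id p k pp; lia.
have E : p ^ p = p * p ^ p.-1 by rewrite -expnS prednK.
have := H p; rewrite E.
set S := \sum_(0 <= j < p) _.
move=> e; apply/eqP; rewrite -(eqn_pmul2l p0); apply/eqP; rewrite -e; lia.
Qed.

Local Open Scope ring_scope.

Lemma ideal_sum (A : comUnitRingType) (J : A -> Prop) k (F : 'I_k -> A) :
  is_ideal J -> (forall i, J (F i)) -> J (\sum_(i < k) F i).
Proof.
case=> J0 JD JM FJ; apply: (big_ind J) => //; exact: JD.
Qed.

Lemma span_sub (A : comUnitRingType) (S J : A -> Prop) :
  is_ideal J -> (forall y, S y -> J y) -> forall y, ideal_span S y -> J y.
Proof.
move=> JI SJ y [k [c [g [Sg ->]]]]; apply: ideal_sum => // i.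
case: JI => _ _ JM; apply: JM; exact: SJ.
Qed.

Lemma span_gen (A : comUnitRingType) (S : A -> Prop) y : S y -> ideal_span S y.
Proof.
move=> Sy; exists 1%N, (fun _ => 1), (fun _ => y); split => //.
by rewrite big_ord1 mul1r.
Qed.

Lemma span_ideal (A : comUnitRingType) (S : A -> Prop) : is_ideal (ideal_span S).
Proof.
split.
- by exists 0%N, (fun _ => 0), (fun _ => 0); split; [case | rewrite big_ord0].
- move=> y z [k1 [c1 [g1 [S1 ->]]]] [k2 [c2 [g2 [S2 ->]]]].
  exists (k1 + k2)%N, (fun i => match split i with inl a => c1 a | inr b => c2 b end),
    (fun i => match split i with inl a => g1 a | inr b => g2 b end); split.
  + by move=> i; case: (split i).
  + rewrite big_split_ord /=; congr (_ + _); apply: eq_bigr => i _.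
    by rewrite (unsplitK (inl _ i)). by rewrite (unsplitK (inr _ i)).
- move=> a y [k [c [g [Sg ->]]]]; exists k, (fun i => a * c i), g; split => //.
  by rewrite mulr_sumr; apply: eq_bigr => i _; rewrite mulrA.
Qed.

Lemma gen_ideal (A : comUnitRingType) k (g : 'I_k -> A) : is_ideal (ideal_gen g).
Proof.
split.
- by exists (fun _ => 0); rewrite big1 // => i _; rewrite mul0r.
- move=> y z [c1 ->] [c2 ->]; exists (fun i => c1 i + c2 i).
  by rewrite -big_split; apply: eq_bigr => i _; rewrite mulrDl.
- move=> a y [c ->]; exists (fun i => a * c i).
  by rewrite mulr_sumr; apply: eq_bigr => i _; rewrite mulrA.
Qed.

Lemma gen_in (A : comUnitRingType) k (g : 'I_k -> A) i : ideal_gen g (g i).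
Proof.
exists (fun j => if j == i then 1 else 0).
rewrite (bigD1 i) //= eqxx mul1r big1 ?addr0 // => j /negbTE ->; by rewrite mul0r.
Qed.

Lemma principalP (A : comUnitRingType) (d y : A) :
  principal_ideal d y <-> exists c, y = c * d.
Proof.
split.
- move=> [k [c [g [Sg ->]]]]; exists (\sum_(i < k) c i).
  by rewrite mulr_suml; apply: eq_bigr => i _; rewrite Sg.
- by move=> [c ->]; case: (span_ideal _ (fun y => y = d)) => _ _ M; apply: M; apply: span_gen.
Qed.

Lemma pow_ideal (A : comUnitRingType) (m : A -> Prop) k : is_ideal (ideal_pow m k).
Proof. by case: k => [|k] /=; [split|exact: span_ideal]. Qed.

Lemma pow_succ_sub (A : comUnitRingType) (m : A -> Prop) k y :
  ideal_pow m k.+1 y -> ideal_pow m k y.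
Proof.
apply: span_sub; first exact: pow_ideal.
move=> z [a [b [Ha [Hb ->]]]]; case: (pow_ideal _ m k) => _ _ M.
by rewrite mulrC; apply: M.
Qed.

Lemma pow_le (A : comUnitRingType) (m : A -> Prop) k l y :
  (k <= l)%N -> ideal_pow m l y -> ideal_pow m k y.
Proof.
elim: l => [|l IH]; first by rewrite leqn0 => /eqP ->.
rewrite leq_eqVlt => /orP[/eqP -> //|]; rewrite ltnS => kl H.
by apply: IH => //; apply: pow_succ_sub.
Qed.

Lemma pow_f (A : comUnitRingType) (m : A -> Prop) f k :
  m f -> ideal_pow m k (f ^+ k).
Proof.
move=> mf; elim: k => [|k IH] //=; rewrite exprSr; apply: span_gen.
by exists (f ^+ k), f.
Qed.

Lemma pow_mulr (A : comUnitRingType) (m : A -> Prop) k a b :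
  ideal_pow m k a -> ideal_pow m k (b * a).
Proof. by case: (pow_ideal _ m k) => _ _ M; apply: M. Qed.

Lemma pow_add (A : comUnitRingType) (m : A -> Prop) k a b :
  ideal_pow m k a -> ideal_pow m k b -> ideal_pow m k (a + b).
Proof. by case: (pow_ideal _ m k) => _ D _; apply: D. Qed.

Lemma pow_opp (A : comUnitRingType) (m : A -> Prop) k a :
  ideal_pow m k a -> ideal_pow m k (- a).
Proof. by move=> H; rewrite -mulN1r; apply: pow_mulr. Qed.

Lemma one_sub_unit (A : comUnitRingType) (m : A -> Prop) a :
  adically_complete m -> m a -> (1 - a) \is a GRing.unit.
Proof.
move=> [C Sep] ma.
have H1 : forall k, ideal_pow m k ((fun k => \sum_(i < k) a ^+ i) k.+1 - (fun k => \sum_(i < k) a ^+ i) k).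
  move=> k /=; rewrite big_ord_recr /= addrAC subrr add0r; exact: pow_f.
have [x Hx] := C _ H1.
apply/unitrPr; exists x; apply/eqP; rewrite -subr_eq0; apply/eqP; apply: Sep => k.
have -> : (1 - a) * x - 1 = (1 - a) * (x - \sum_(i < k) a ^+ i) - a ^+ k.
  have := subrX1 a k; move=> e.
  have -> : (1 - a) * (x - \sum_(i < k) a ^+ i) - a ^+ k
     = (1 - a) * x + ((a - 1) * \sum_(i < k) a ^+ i) - a ^+ k by ring.
  rewrite -e; ring.
by apply: pow_add; [apply: pow_mulr; apply: Hx | apply: pow_opp; apply: pow_f].
Qed.

Lemma local_ideal (A : comUnitRingType) (m : A -> Prop) :
  is_local_with m -> is_ideal m /\ ~ m 1.
Proof. by case=> [[]]. Qed.

Lemma local_unit (A : comUnitRingType) (m : A -> Prop) u :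
  is_local_with m -> adically_complete m -> ~ m u -> u \is a GRing.unit.
Proof.
move=> [[mI m1 mx] _] C nu.
pose J := fun y => exists a b, m a /\ y = a + b * u.
have JI : is_ideal J.
  split.
  - by exists 0, 0; case: mI => m0 _ _; split => //; rewrite mul0r addr0.
  - move=> y z [a1 [b1 [h1 ->]]] [a2 [b2 [h2 ->]]]; exists (a1 + a2), (b1 + b2).
    by case: mI => _ D _; split; [apply: D | ring].
  - move=> c y [a [b [h ->]]]; exists (c * a), (c * b).
    by case: mI => _ _ M; split; [apply: M | ring].
have mJ : forall y, m y -> J y by move=> y my; exists y, 0; rewrite mul0r addr0.
case: (mx J JI mJ) => [[a [b [ma e]]] | same].
  have := one_sub_unit _ m a C ma.
  have -> : 1 - a = b * u by rewrite e; ring.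
  by rewrite unitrM => /andP[].
exfalso; apply: nu; apply/same; exists 0, 1; rewrite mul1r add0r //.
by case: mI.
Qed.

Lemma unit_notin (A : comUnitRingType) (m : A -> Prop) u :
  is_local_with m -> u \is a GRing.unit -> ~ m u.
Proof.
move=> /local_ideal [[_ _ M] n1] U mu; apply: n1.
by rewrite -(mulVr U); apply: M.
Qed.

Lemma delta_nat (A : comUnitRingType) p (delta : A -> A) :
  is_delta_structure p delta -> forall k,
  delta (k%:R) = - ((\sum_(0 <= j < k) \sum_(1 <= i < p) ('C(p,i) %/ p) * j ^ i)%N%:R).
Proof.
case=> d0 d1 dD dM; elim=> [|k IH]; first by rewrite big_geq // d0 oppr0.
rewrite big_nat_recr //= -addn1 natrD dD IH d1 addr0 natrD opprD; congr (_ + _).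
rewrite /delta_add_term natr_sum; congr (- _); apply: eq_bigr => i _.
by rewrite expr1n mulr1 natrM natrX.
Qed.

Lemma delta_p (A : comUnitRingType) p (delta : A -> A) :
  prime p -> is_delta_structure p delta -> delta p%:R = 1 - p%:R ^+ p.-1.
Proof.
move=> pp D; rewrite (delta_nat _ _ _ D) -natrX -(nat_sum _ pp)  mulrS; ring.
Qed.

Lemma frob_mul (A : comUnitRingType) p (delta : A -> A) a b :
  is_delta_structure p delta -> frob p delta (a * b) = frob p delta a * frob p delta b.
Proof. by case=> _ _ _ dM; rewrite /frob dM exprMn; ring. Qed.

Lemma dat_in (A : comUnitRingType) p (delta : A -> A) (m : A -> Prop) u v :
  is_ideal m -> m u -> m (delta_add_term p u v).
Proof.
move=> [m0 mD mM] mu; rewrite /delta_add_term -mulN1r; apply: (mM).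
rewrite big_nat_cond; apply: (big_ind m) => // i /andP[/andP[i1 ip] _].
rewrite -(subnK i1) addn1 exprSr -mulrA mulrAC mulrC -!mulrA; apply: (mM).
by apply: (mM); rewrite mulrC; apply: (mM).
Qed.

Lemma delta_gen_in (A : comUnitRingType) p (delta : A -> A) (m : A -> Prop) n
  (x : 'I_n -> A) g :
  (0 < p)%N -> is_delta_structure p delta -> is_ideal m ->
  (forall j, m (x j)) -> (forall j, m (delta (x j))) ->
  ideal_gen x g -> m g /\ m (delta g).
Proof.
move=> p0 [d0 d1 dD dM] mI mx mdx [c ->].
have mI' := mI; case: mI' => [m0 mD mM].
apply: (big_ind (fun y => m y /\ m (delta y))).
- by rewrite d0.
- move=> y z [my mdy] [mz mdz]; split; first exact: (mD).
  by rewrite dD; apply: (mD); [exact: (mD) | exact: (dat_in _ _ _ _ _ _ mI)].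
- move=> j _; split; first exact: (mM).
  rewrite dM; apply: (mD); [apply: (mD)|].
  + exact: (mM).
  + by rewrite -(prednK p0) exprS -mulrA mulrC; apply: (mM); apply: mx.
  + by apply: (mM).
Qed.

Lemma cons_gen0 (A : comUnitRingType) n (a : A) (g : 'I_n -> A) :
  cons_gen a g ord0 = a.
Proof. by rewrite /cons_gen unlift_none. Qed.

Lemma cons_genS (A : comUnitRingType) n (a : A) (g : 'I_n -> A) j :
  cons_gen a g (lift ord0 j) = g j.
Proof. by rewrite /cons_gen liftK. Qed.

Lemma decomp (A : comUnitRingType) n (a : A) (g : 'I_n -> A) y :
  ideal_gen (cons_gen a g) y -> exists b f, ideal_gen g f /\ y = b * a + f.
Proof.
move=> [c ->]; rewrite big_ord_recl cons_gen0.
exists (c ord0), (\sum_(i < n) c (lift ord0 i) * cons_gen a g (lift ord0 i)).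
split => //; exists (fun i => c (lift ord0 i)); apply: eq_bigr => i _.
by rewrite cons_genS.
Qed.

Lemma dc_m (A : comUnitRingType) (m : A -> Prop) f :
  adically_complete m -> m f ->
  (forall t : nat -> A, exists s : nat -> A, forall k, s k - f * s k.+1 = t k) /\
  (forall s s' : nat -> A, (forall k, s k - f * s k.+1 = s' k - f * s' k.+1) ->
        forall k, s k = s' k).
Proof.
move=> [C Sep] mf; split.
- move=> t.
  pose a k N := \sum_(j < N) f ^+ j * t (k + j)%N.
  have Ex : forall k, exists x, forall N, ideal_pow m N (x - a k N).
    move=> k; apply: C => N; rewrite /a big_ord_recr /= addrAC subrr add0r.
    by rewrite mulrC; apply: pow_mulr; apply: pow_f.
  pose s k := proj1_sig (constructive_indefinite_description _ (Ex k)).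
  have Hs : forall k N, ideal_pow m N (s k - a k N).
    by move=> k; rewrite /s; case: (constructive_indefinite_description _ _).
  exists s => k; apply/eqP; rewrite -subr_eq0; apply/eqP; apply: Sep => N.
  have Ha : a k N.+1 = t k + f * a k.+1 N.
    rewrite /a big_ord_recl /= expr0 mul1r addn0 mulr_sumr; congr (_ + _).
    by apply: eq_bigr => j _; rewrite exprS mulrA addSnnS.
  have -> : s k - f * s k.+1 - t k = (s k - a k N.+1) - f * (s k.+1 - a k.+1 N).
    by rewrite Ha; ring.
  apply: pow_add; first by apply: pow_succ_sub.
  by apply: pow_opp; apply: pow_mulr.
- move=> s s' H.
  pose u k := s k - s' k.
  have Hu : forall k, u k = f * u k.+1.
    by move=> k; rewrite /u; apply/eqP; rewrite -subr_eq0; apply/eqP;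
      have := H k; move/eqP; rewrite -subr_eq0 => /eqP e; rewrite -e; ring.
  have HN : forall N k, u k = f ^+ N * u (k + N)%N.
    elim=> [|N IH] k; first by rewrite expr0 mul1r addn0.
    by rewrite IH Hu exprSr -mulrA addnS.
  move=> k; apply/eqP; rewrite -subr_eq0; apply/eqP; apply: Sep => N.
  rewrite -/(u k) (HN N k) mulrC; apply: pow_mulr; exact: pow_f.
Qed.

Theorem lemma5p1 (A : idomainType) (p : nat) (delta : A -> A) (m : A -> Prop)
  (n : nat) (x : 'I_n -> A) :
  prime p ->
  Zp_local_algebra A p ->
  is_local_with m -> noetherian A -> adically_complete m ->
  is_delta_structure p delta ->
  same_set m (ideal_gen (cons_gen p%:R x)) ->
  (forall i, m (delta (x i))) ->
  forall I : A -> Prop, is_ideal I ->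
    (is_orientable_prism p delta I <->
       exists d, [/\ m d, distinguished delta d & same_set I (principal_ideal d)]) /\
    ((exists d, [/\ m d, distinguished delta d & same_set I (principal_ideal d)]) <->
       exists f, ideal_gen x f /\ same_set I (principal_ideal (p%:R - f))).
Proof.
move=> pp _ loc _ comp D msame mdx I II.
have [mI m1] := local_ideal _ _ loc.
have mI' := mI; case: mI' => [m0 mD mM].
have p0 := prime_gt0 pp.
have p1 : (0 < p.-1)%N by rewrite -ltnS prednK // prime_gt1.
have mp : m p%:R by apply/msame; have := gen_in _ _ (cons_gen p%:R x) ord0; rewrite cons_gen0.
have mx : forall j, m (x j) by move=> j; apply/msame; have := gen_in _ _ (cons_gen p%:R x) (lift ord0 j); rewrite cons_genS.
have unit_out : forall u, ~ m u -> u \is a GRing.unit.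
  by move=> u; apply: local_unit.
have dp := delta_p _ _ _ pp D.
have notm_dp : forall y, m y -> ~ m (delta p%:R + y).
  move=> y my mdy; apply: m1.
  have -> : 1 = (delta p%:R + y) + (p%:R ^+ p.-1 - y) by rewrite dp; ring.
  apply: (mD) => //; apply: (mD); last by rewrite -mulN1r; apply: (mM).
  by rewrite -(prednK p1) exprSr; apply: (mM).
have powm : forall a k, m a -> m (a ^+ k.+1) by move=> a k ma; rewrite exprSr; apply: (mM).
have powp : forall a, m a -> m (a ^+ p) by move=> a ma; rewrite -(prednK p0); apply: powm.
have [_ _ dD dM] := D.
split.
- split.
  + move=> [[_ _ DC [i [j [Ii [Sj e]]]]] [d Id]].
    have Idd : I d by apply/Id; apply/principalP; exists 1; rewrite mul1r.
    have md : m d.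
      case: (classic (m d)) => // nmd; exfalso.
      have U := unit_out _ nmd.
      have Jd : ideal_span (fun y => y = p%:R \/ I y) d by apply: span_gen; right.
      have := (DC d Jd).2 (fun k => d^-1 ^+ k) (fun _ => 0).
      have H : forall k, d^-1 ^+ k - d * d^-1 ^+ k.+1 = 0 - d * 0.
        by move=> k; rewrite exprS mulrA divrr // mul1r subrr mulr0 subrr.
      move=> /(_ H 0%N); rewrite expr0 => /eqP; by rewrite oner_eq0.
    exists d; split => //.
    case: (classic (m (delta d))) => hd; last exact: unit_out.
    exfalso.
    have [c ei] : exists c, i = c * d by apply/principalP; apply/Id.
    have [b ej] : exists b, j = b * frob p delta d.
      apply/principalP; move: Sj; apply: span_sub; first exact: span_ideal.
      move=> y [z [Iz ->]]; have [c' ->] : exists c', z = c' * d by apply/principalP; apply/Id.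
      by apply/principalP; exists (frob p delta c'); rewrite frob_mul.
    have U : (1 - b * delta d) \is a GRing.unit.
      by apply: (one_sub_unit _ m) => //; apply: (mM).
    have E1 : p%:R * (1 - b * delta d) = d * (c + b * d ^+ p.-1).
      have : p%:R = c * d + b * (d ^+ p + p%:R * delta d) by rewrite [in LHS]e ei ej /frob.
      have dp' : d ^+ p = d * d ^+ p.-1 by rewrite -exprS prednK.
      by move=> e2; rewrite mulrBr mulr1 {1}e2 dp'; ring.
    have E2 : p%:R = d * ((c + b * d ^+ p.-1) / (1 - b * delta d)).
      by rewrite mulrA -E1 mulrK.
    apply: (notm_dp 0 m0); rewrite addr0 E2 dM.
    apply: (mD); [apply: (mD)|].
    * by rewrite -(prednK p0) exprS -mulrA mulrC; apply: (mM).
    * by apply: (mM).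
    * by rewrite -mulrA mulrC; apply: (mM).
  + move=> [d [md dd Id]].
    have Idd : I d by apply/Id; apply/principalP; exists 1; rewrite mul1r.
    have d0 : d != 0.
      apply/eqP => d0; move: dd; rewrite /distinguished d0.
      by case: D => -> _ _ _; rewrite unitr0.
    split; last by exists d.
    split => //.
    * exists 1%N, (fun _ => 1); split.
        by exists (fun _ => 1); rewrite big_ord1 mulr1.
      move=> _; exists d; split => //; split.
        by move=> y /Id /principalP [c ->]; exists 0%N, c; rewrite expr0 mul1r.
      move=> a [N]; rewrite expr1n mul1r => /eqP; rewrite mulf_eq0 (negbTE d0) orbF.
      by move=> /eqP ->; exists 0%N; rewrite mulr0.
    * move=> f Jf; apply: (dc_m _ m) => //; move: Jf; apply: span_sub => //.
      move=> y [->|/Id /principalP [c ->]] //; by apply: (mM).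
    * exists (- (delta d)^-1 * d ^+ p.-1 * d), ((delta d)^-1 * frob p delta d); split; last split.
      - by apply/Id/principalP; eexists.
      - case: (span_ideal _ (fun y => exists z, I z /\ y = frob p delta z)) => _ _ M.
        by apply: M; apply: span_gen; exists d.
      - have -> : - (delta d)^-1 * d ^+ p.-1 * d + (delta d)^-1 * frob p delta d
            = (delta d)^-1 * (delta d * p%:R).
          by rewrite /frob -{2}(prednK p0) exprS; ring.
        by rewrite mulKr.
- split.
  + move=> [d [md dd Id]].
    have [b [g [gg ed]]] := decomp _ _ _ _ _ ((msame d).1 md).
    have [mg mdg] := delta_gen_in _ _ _ _ _ _ _ p0 D mI mx mdx gg.
    have bu : b \is a GRing.unit.
      case: (classic (m b)) => hb; last exact: unit_out.
      exfalso; apply: (unit_notin _ _ _ loc dd).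
      rewrite ed dD dM; apply: (mD); [apply: (mD)|].
      * apply: (mD); [apply: (mD)|].
        - by rewrite -(prednK p0) exprS -mulrA mulrC; apply: (mM).
        - by rewrite mulrC; apply: (mM); apply: powp.
        - by rewrite -mulrA mulrC; apply: (mM).
      * done.
      * by apply: (dat_in _ _ delta _ _ _ mI); apply: (mM).
    exists (- b^-1 * g); split.
      by case: (gen_ideal _ _ x) => _ _ M; apply: M.
    have E : p%:R - - b^-1 * g = b^-1 * d by rewrite ed mulrDr mulKr //; ring.
    rewrite E => y; rewrite Id !principalP; split.
    * by move=> [c ->]; exists (c * b); rewrite mulrA -(mulrA c) divrr // mulr1.
    * by move=> [c ->]; exists (c * b^-1); rewrite mulrA.
  + move=> [f [gf If]].
    exists (p%:R - f).
    have gf' : ideal_gen x (- f) by case: (gen_ideal _ _ x) => _ _ M; rewrite -mulN1r; apply: M.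
    have [mf _] := delta_gen_in _ _ _ _ _ _ _ p0 D mI mx mdx gf.
    have [_ mdf] := delta_gen_in _ _ _ _ _ _ _ p0 D mI mx mdx gf'.
    split => //.
    * by apply: (mD) => //; rewrite -mulN1r; apply: (mM).
    * case: (classic (m (delta (p%:R - f)))) => hd; last exact: unit_out.
      exfalso; apply: (notm_dp (delta (- f) + delta_add_term p p%:R (- f))).
        by apply: (mD) => //; apply: (dat_in _ _ _ _ _ _ mI).
      by move: hd; rewrite dD addrA.
Qed.
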